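(* Consider the redundancy system with $N$ parallel servers and $d\le N$ replicas per job described in the context. Let $\boldsymbol{\omega}=(\omega_1,\dots,\omega_N)$ be a workload state and let $\omega_{(1)}\ge\omega_{(2)}\ge\dots\ge\omega_{(N)}$ denote its ordered values. If $\omega_{(1)}=\omega_{(2)}=\dots=\omega_{(d)}$, then every future workload state $\boldsymbol{\omega}_{\mathrm{new}}$ also satisfies $\omega_{\mathrm{new},(1)}=\dots=\omega_{\mathrm{new},(d)}$. That is, once the $d$ largest workloads are equal, they remain equal forever.
   Context: System: $N$ parallel servers; jobs arrive according to a Poisson process of rate $\lambda$. Each arriving job is replicated into $d$ replicas ($1\le d\le N$), which are sent to $d$ distinct servers chosen uniformly at random without replacement. Replicas are served first-come-first-served at each server; a job is completed as soon as the first of its replicas completes service, at which moment the other $d-1$ replicas are instantaneously abandoned (cancel-on-completion). The service requirements of the $d$ replicas are i.i.d. copies of a nonnegative random variable $B$ (independent across jobs). The workload $\omega_i$ of server $i$ is the real amount of work server $i$ must perform to become idle in the absence of further arrivals; between arrivals each positive workload decreases at unit rate. If a job arrives with sampled servers $s_1,\dots,s_d$ and realized replica requirements $b_1,\dots,b_d$, then the new workload at server $s_l$ is $\max\{\min_{j\in\{1,\dots,d\}}(\omega_{s_j}+b_j),\ \omega_{s_l}\}$ for $l=1,\dots,d$, and the workloads of the other servers are unchanged. *)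

(* Defs.v *)
From HB Require Import structures.
From mathcomp Require Import all_boot all_order all_algebra.
Set Implicit Arguments. Unset Strict Implicit. Unset Printing Implicit Defensive.
Import Order.TTheory GRing.Theory Num.Theory.
Local Open Scope ring_scope.

(* k-th largest workload (0-indexed): omega_(k+1) in the paper's notation. *)
Definition ord_stat (R : realDomainType) (N : nat) (w : 'I_N -> R) (k : nat) : R :=
  nth 0 (sort (fun x y : R => y <= x) [seq w i | i <- enum 'I_N]) k.

Definition top_equal (R : realDomainType) (N d : nat) (w : 'I_N -> R) : Prop :=
  forall k : nat, (k < d)%N -> ord_stat w k = ord_stat w 0.

Inductive step (R : realDomainType) (N d : nat) : ('I_N -> R) -> ('I_N -> R) -> Prop :=
  (* elapse of time t >= 0 without arrivals: positive workloads decrease at unit rate *)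
  | step_drift (w : 'I_N -> R) (t : R) :
      0 <= t -> step d w (fun i => Num.max (w i - t) 0)
  (* arrival of a job replicated to d distinct servers s with requirements b *)
  | step_arrival (w : 'I_N -> R) (s : 'I_d -> 'I_N) (b : 'I_d -> R) (j0 : 'I_d) :
      injective s -> (forall j, 0 <= b j) ->
      step d w (fun i =>
        if [exists l, s l == i]
        then Num.max (\big[Num.min/(w (s j0) + b j0)]_(j < d) (w (s j) + b j)) (w i)
        else w i).

Inductive reachable (R : realDomainType) (N d : nat) (w : 'I_N -> R) : ('I_N -> R) -> Prop :=
  | reach_refl : reachable d w w
  | reach_step (w1 w2 : 'I_N -> R) : reachable d w w1 -> step d w1 w2 -> reachable d w w2.

(* Main.v *)
Require Import Defs.
From mathcomp Require Import all_boot all_order all_algebra.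
Import Order.TTheory GRing.Theory Num.Theory.
Local Open Scope ring_scope.

Lemma cnt (N : nat) (P : pred 'I_N) : count P (enum 'I_N) = #|P|.
Proof. by rewrite enumT cardE /enum_mem size_filter. Qed.

Definition Pinv (R : realDomainType) (N d : nat) (w : 'I_N -> R) : Prop :=
  exists M, (forall i, w i <= M) /\ (d <= #|[pred i | w i == M]|)%N.
Arguments Pinv {R N} d w.

Section Key.
Variables (R : realDomainType) (N d : nat) (w : 'I_N -> R).
Hypotheses (hd1 : (1 <= d)%N) (hdN : (d <= N)%N).

Let L := [seq w i | i <- enum 'I_N].
Let s := sort (fun x y : R => y <= x) L.

Lemma s_sorted : sorted (fun x y : R => y <= x) s.
Proof. apply: sort_sorted => x y; exact: le_total. Qed.

Lemma size_s : size s = N.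
Proof. by rewrite /s size_sort /L size_map size_enum_ord. Qed.

Lemma s_le j : (j < size s)%N -> nth 0 s j <= nth 0 s 0.
Proof.
move=> hj.
have := @sorted_leq_nth R (fun x y : R => y <= x) _ _ 0 s s_sorted 0 j.
apply => //.
- move=> x y z /= h1 h2; exact: le_trans h2 h1.
- by rewrite inE (leq_ltn_trans _ hj).
Qed.

Lemma s_le2 k j : (k <= j)%N -> (j < size s)%N -> nth 0 s j <= nth 0 s k.
Proof.
move=> hkj hj.
have := @sorted_leq_nth R (fun x y : R => y <= x) _ _ 0 s s_sorted k j.
apply => //.
- move=> x y z /= h1 h2; exact: le_trans h2 h1.
- by rewrite inE (leq_ltn_trans hkj hj).
Qed.

Lemma s_count y : count (pred1 y) s = #|[pred i | w i == y]|.
Proof.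
rewrite /s (permP (permEl (perm_sort _ L))) /L count_map -cnt.
by apply: eq_count => i.
Qed.

Lemma mem_s y : (y \in s) = (y \in L).
Proof. by rewrite /s (perm_mem (permEl (perm_sort _ L))). Qed.

Lemma key : top_equal d w <-> Pinv d w.
Proof.
have hN : (0 < size s)%N by rewrite size_s (leq_trans hd1).
split.
- move=> ht; exists (nth 0 s 0); split.
    move=> i.
    have : w i \in s by rewrite mem_s /L map_f // mem_enum.
    move=> /(nthP 0) [j hj <-]; exact: s_le.
  rewrite -s_count; set x := nth 0 s 0; rewrite -(cat_take_drop d s) count_cat.
  apply: leq_trans (leq_addr _ _).
  have hsz : size (take d s) = d by rewrite size_take_min size_s; apply/minn_idPl.
  have : all (pred1 x) (take d s).
    apply/(all_nthP 0) => k; rewrite hsz => hk.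
    by rewrite nth_take //=; have := ht k hk; rewrite /ord_stat => ->.
  by rewrite all_count => /eqP ->; rewrite hsz.
- move=> [M [hb hc]].
  have hMx : M = nth 0 s 0.
    apply/eqP; rewrite eq_le; apply/andP; split.
      have : (0 < count (pred1 M) s)%N by rewrite s_count (leq_trans hd1).
      rewrite -has_count => /hasP [y ys /eqP <-].
      by move: ys => /(nthP 0) [j hj <-]; exact: s_le.
    have : nth 0 s 0 \in L by rewrite -mem_s mem_nth.
    by move=> /mapP [i _ ->].
  subst M.
  move=> k hk; apply/eqP; apply/negPn/negP => hne.
  have hks : (k < size s)%N by rewrite size_s (leq_trans hk).
  have hlt : nth 0 s k < nth 0 s 0 by rewrite lt_neqAle hne s_le.
  move: hc; rewrite -s_count; set x := nth 0 s 0; rewrite -(cat_take_drop k s) count_cat.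
  have -> : count (pred1 x) (drop k s) = 0%N.
    apply/eqP; rewrite -leqn0 leqNgt -has_count; apply/hasPn => y.
    move=> /(nthP 0) [j hj <-]; rewrite nth_drop /=.
    move: hj; rewrite size_drop => hj.
    have hj2 : (k + j < size s)%N by rewrite -ltn_subRL.
    have := @s_le2 k (k + j) (leq_addr j k) hj2.
    move=> h; apply/negP => /eqP he.
    by move: (le_lt_trans h hlt); rewrite he ltxx.
  rewrite addn0 => hc.
  have := leq_trans hc (count_size _ _).
  rewrite size_take_min => h.
  have := leq_trans h (geq_minl _ _).
  by rewrite leqNgt hk.
Qed.

End Key.

Lemma step_inv (R : realDomainType) (N d : nat) (w w' : 'I_N -> R) :
  step d w w' -> Pinv d w -> Pinv d w'.
Proof.
case=> {w w'} [w t ht | w s b j0 hs hb] [M [hM hc]].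
- exists (Num.max (M - t) 0); split.
    move=> i; rewrite ge_max !le_max lexx orbT andbT.
    by rewrite lerD2r hM.
  apply: leq_trans hc _; apply: subset_leq_card; apply/subsetP => i.
  by rewrite !inE => /eqP ->.
- set m := \big[Num.min/(w (s j0) + b j0)]_(j < d) (w (s j) + b j).
  case: (leP M m) => hMm.
  + exists m; split.
      move=> i; case: ifP => _; first by rewrite ge_max lexx (le_trans (hM i) hMm).
      exact: le_trans (hM i) hMm.
    have hcd : #|codom s| = d by rewrite card_codom // card_ord.
    rewrite -[X in (X <= _)%N]hcd.
    apply: subset_leq_card; apply/subsetP => i /codomP [l ->].
    rewrite inE.
    have -> : [exists l0, s l0 == s l] by apply/existsP; exists l.
    by rewrite max_l // (le_trans (hM _) hMm).
  + exists M; split.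
      move=> i; case: ifP => _; last exact: hM.
      by rewrite ge_max (ltW hMm) hM.
    apply: leq_trans hc _; apply: subset_leq_card; apply/subsetP => i.
    rewrite !inE => /eqP hi; case: ifP => _; last by rewrite hi.
    by rewrite hi max_r // ltW.
Qed.

Theorem mainTheorem1 (R : realDomainType) (N d : nat) (w : 'I_N -> R) :
  (1 <= d)%N -> (d <= N)%N -> (forall i, 0 <= w i) ->
  top_equal d w ->
  forall w_new : 'I_N -> R, reachable d w w_new -> top_equal d w_new.
Proof.
move=> hd1 hdN _ /(@key _ _ _ w hd1 hdN) hP w_new hr.
apply/(@key _ _ _ w_new hd1 hdN).
elim: hr => [|w1 w2 _ IH hst] //.
exact: step_inv hst IH.
Qed.
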